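(* Let $\mathcal{D}=M_{n_1}(\mathbb{C})\oplus\cdots\oplus M_{n_k}(\mathbb{C})$, let $\mathcal{A}\subseteq\mathcal{D}$ be a CSL subalgebra, and let $\mathcal{B}$ be a complex algebra containing $\mathcal{D}$ as a subalgebra with the same unit $I$. If $\delta:\mathcal{A}\to\mathcal{B}$ is a linear map with $(m+n+l)\delta(A^2)=m\delta(A)A+nA\delta(A)+lA\delta(I)A$ for all $A\in\mathcal{A}$, then $\delta(AB)=\delta(A)B=A\delta(B)$ for all $A,B\in\mathcal{A}$.
   Context: Fixed integers $m,n,l\ge 0$ satisfy $m+l\ge1$ and $n+l\ge1$. A CSL subalgebra of $\mathcal{D}$ is a subalgebra of the form $\mathrm{alg}\mathcal{L}$ for a commutative lattice $\mathcal{L}$ of projections in the diagonal of $\mathcal{D}$ (with respect to a fixed system of matrix units); in particular it contains all diagonal matrix units $E_{ii}$ and is the linear span of the matrix units $E_{ij}$ it contains. *)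

(* Defs.v *)
From HB Require Import structures.
From mathcomp Require Import all_boot all_order all_algebra.
Set Implicit Arguments. Unset Strict Implicit. Unset Printing Implicit Defensive.
Import Order.TTheory GRing.Theory Num.Theory.
Local Open Scope ring_scope.

(* D = M_{n_1} (+) ... (+) M_{n_k}, realised inside 'M_N (N = n_1+...+n_k)
   as the block-diagonal matrices w.r.t. the block assignment
   blk : 'I_N -> 'I_k (index i lies in block blk i; n_j = #{i | blk i = j}).
   The matrix units of D are the E_ij with blk i = blk j. *)
Definition blockD (F : fieldType) (N k : nat) (blk : 'I_N -> 'I_k) :
    pred 'M[F]_N :=
  fun A => [forall i, forall j, (blk i != blk j) ==> (A i j == 0)].

Definition dproj (F : fieldType) (N : nat) (S : {set 'I_N}) : 'M[F]_N :=
  \matrix_(i, j) ((i == j) && (i \in S))%:R.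

Definition is_proj_lattice (N : nat) (L : {set {set 'I_N}}) : Prop :=
  [/\ set0 \in L, setT \in L,
      {in L &, forall S T, S :|: T \in L} &
      {in L &, forall S T, S :&: T \in L}].

Definition algL (F : fieldType) (N k : nat) (blk : 'I_N -> 'I_k)
    (L : {set {set 'I_N}}) : pred 'M[F]_N :=
  fun A => blockD blk A &&
    [forall S in L, dproj F S *m A *m dproj F S == A *m dproj F S].

Definition unital_subalg_embedding (F : fieldType) (B : algType F)
    (N : nat) (D : pred 'M[F]_N) (phi : 'M[F]_N -> B) : Prop :=
  [/\ {in D &, forall X Y, forall a : F, phi (a *: X + Y) = a *: phi X + phi Y},
      {in D &, forall X Y, phi (X *m Y) = phi X * phi Y},
      phi 1%:M = 1 &
      {in D &, injective phi}].

(* Main.v *)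
Require Import Defs.
From HB Require Import structures.
From mathcomp Require Import all_boot all_order all_algebra.
Import Order.TTheory GRing.Theory Num.Theory.
Set Implicit Arguments. Unset Strict Implicit. Unset Printing Implicit Defensive.
Local Open Scope ring_scope.

Section Ring.
Variable R : pzRingType.

Lemma natcancel (x : R) (a b : nat) : x *+ (a + b) = x *+ a -> x *+ b = 0.
Proof. rewrite mulrnDr => H; apply: (@addrI _ (x *+ a)); by rewrite H addr0. Qed.

Lemma proj_facts (u v d t : R) (m n l : nat) :
  u * u = u -> v * v = v -> u * v = 0 -> v * u = 0 ->
  d *+ (m + n + l) = (d * u) *+ m + (u * d) *+ n + (u * t * u) *+ l ->
  [/\ (u * d * v) *+ (m + l) = 0, (v * d * u) *+ (n + l) = 0
    & (v * d * v) *+ (m + n + l) = 0].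
Proof.
move=> huu hvv huv hvu H.
have huv' x : x * u * v = 0 by rewrite -mulrA huv mulr0.
have hvu' x : x * v * u = 0 by rewrite -mulrA hvu mulr0.
have huu' x : x * u * u = x * u by rewrite -mulrA huu.
have hvv' x : x * v * v = x * v by rewrite -mulrA hvv.
split.
- have := congr1 (fun z => u * z * v) H => /=.
  rewrite !mulrDr !mulrDl !mulrnAr !mulrnAl !mulrA ?huu ?huv ?huv' ?mul0r ?mulr0.
  rewrite ?mul0rn ?addr0 ?add0r.
  rewrite (_ : (m + n + l = n + (m + l))%N); last by rewrite addnAC addnC.
  exact: natcancel.
- have := congr1 (fun z => v * z * u) H => /=.
  rewrite !mulrDr !mulrDl !mulrnAr !mulrnAl !mulrA ?huu' ?hvu ?hvu' ?mul0r ?mulr0.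
  rewrite ?mul0rn ?addr0 ?add0r.
  rewrite (_ : (m + n + l = m + (n + l))%N); last by rewrite addnA.
  exact: natcancel.
- have := congr1 (fun z => v * z * v) H => /=.
  rewrite !mulrDr !mulrDl !mulrnAr !mulrnAl !mulrA ?hvu ?huv' ?mul0r ?mulr0.
  by rewrite ?mul0rn ?addr0 ?add0r.
Qed.

Lemma proj_comm (u v dU dV t : R) (m n l : nat) :
  (forall (x : R) k, (0 < k)%N -> x *+ k = 0 -> x = 0) ->
  (1 <= m + l)%N -> (1 <= n + l)%N ->
  u + v = 1 -> u * u = u -> v * v = v -> u * v = 0 -> v * u = 0 ->
  dU *+ (m + n + l) = (dU * u) *+ m + (u * dU) *+ n + (u * t * u) *+ l ->
  dV *+ (m + n + l) = (dV * v) *+ m + (v * dV) *+ n + (v * t * v) *+ l ->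
  dU + dV = t ->
  dU = t * u /\ u * t = t * u.
Proof.
move=> canc hml hnl huv1 huu hvv huv hvu HU HV ht.
have [a1 b1 c1] := proj_facts huu hvv huv hvu HU.
have [a2 b2 c2] := proj_facts hvv huu hvu huv HV.
have s0 : (0 < m + n + l)%N by rewrite -addnA (leq_trans hnl) // leq_addl.
move/canc: a1 => /(_ hml) a1; move/canc: b1 => /(_ hnl) b1.
move/canc: c1 => /(_ s0) c1; move/canc: a2 => /(_ hml) a2.
move/canc: b2 => /(_ hnl) b2; move/canc: c2 => /(_ s0) c2.
have utv : u * t * v = 0 by rewrite -ht mulrDr mulrDl a1 b2 addr0.
have vtu : v * t * u = 0 by rewrite -ht mulrDr mulrDl b1 a2 addr0.
have utu : u * t * u = u * dU * u by rewrite -ht mulrDr mulrDl c2 addr0.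
have dUe : dU = u * dU * u.
  have e : dU = (u + v) * dU * (u + v) by rewrite huv1 mul1r mulr1.
  by rewrite {1}e !mulrDr !mulrDl a1 b1 c1 !addr0.
have ut : u * t = u * t * u by rewrite -{1}[u * t]mulr1 -huv1 mulrDr utv addr0.
have tu : t * u = u * t * u by rewrite -{1}[t]mul1r -huv1 !mulrDl vtu addr0.
by rewrite ut tu utu -dUe; split.
Qed.
End Ring.

Section Mx.
Variables (F : fieldType) (N k : nat) (blk : 'I_N -> 'I_k) (L : {set {set 'I_N}}).

Definition okij (i j : 'I_N) := (blk i == blk j) && [forall S in L, (j \in S) ==> (i \in S)].

Lemma dprojl (S : {set 'I_N}) (A : 'M[F]_N) i j :
  (dproj F S *m A) i j = (i \in S)%:R * A i j.
Proof.
rewrite !mxE (bigD1 i) //= big1 ?addr0; first by rewrite mxE eqxx.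
by move=> x /negbTE hx; rewrite mxE eq_sym hx mul0r.
Qed.

Lemma dprojr (S : {set 'I_N}) (A : 'M[F]_N) i j :
  (A *m dproj F S) i j = A i j * (j \in S)%:R.
Proof.
rewrite !mxE (bigD1 j) //= big1 ?addr0; first by rewrite mxE eqxx.
by move=> x /negbTE hx; rewrite mxE hx mulr0.
Qed.

Lemma algLP (A : 'M[F]_N) :
  algL blk L A <-> (forall i j, A i j != 0 -> okij i j).
Proof.
split.
- case/andP=> /forallP hD /forallP hS i j hA; apply/andP; split.
    by apply: contraR hA => hb; move: (hD i) => /forallP /(_ j) /implyP /(_ hb).
  apply/forallP => S; apply/implyP => SL; apply/implyP => jS.
  move: (hS S); rewrite SL /= => /eqP /matrixP /(_ i j).
  rewrite !dprojr dprojl jS !mulr1.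
  by case: (i \in S) => //; rewrite mul0r => /esym /eqP; rewrite (negbTE hA).
- move=> H; apply/andP; split.
    apply/forallP => i; apply/forallP => j; apply/implyP => hb.
    by apply: contraR hb => /H /andP [].
  apply/forallP => S; apply/implyP => SL; apply/eqP/matrixP => i j.
  rewrite !dprojr dprojl.
  have [->|hA] := eqVneq (A i j) 0; first by rewrite !mulr0 !mul0r.
  case/andP: (H i j hA) => _ /forallP /(_ S); rewrite SL /= => /implyP hij.
  by case jS: (j \in S); [rewrite hij // mul1r | rewrite !mulr0].
Qed.

Lemma algL1 : algL blk L (1%:M : 'M[F]_N).
Proof.
apply/algLP => i j; rewrite mxE; case: (i =P j) => [-> _|]; last by rewrite mulr0n eqxx.
by apply/andP; split => //; apply/forallP => S; apply/implyP => _; apply/implyP.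
Qed.

Lemma algL_lin (a : F) (X Y : 'M[F]_N) : algL blk L X -> algL blk L Y -> algL blk L (a *: X + Y).
Proof.
move=> /algLP hX /algLP hY; apply/algLP => i j; rewrite !mxE.
have [-> |/hX //] := eqVneq (X i j) 0.
by rewrite mulr0 add0r => /hY.
Qed.

Lemma okij_trans i j l : okij i j -> okij j l -> okij i l.
Proof.
case/andP=> /eqP e1 /forallP h1 /andP [/eqP e2 /forallP h2].
apply/andP; split; first by rewrite e1 e2.
apply/forallP => S; apply/implyP => SL; apply/implyP => lS.
move: (h1 S) (h2 S); rewrite SL /= => /implyP h1' /implyP h2'.
exact/h1'/h2'.
Qed.

Lemma algL_mul (X Y : 'M[F]_N) : algL blk L X -> algL blk L Y -> algL blk L (X *m Y).
Proof.
move=> /algLP hX /algLP hY; apply/algLP => i j; rewrite !mxE => hs.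
apply: contraR hs => hn; apply/eqP; apply: big1 => l _.
have [-> |/hX hil] := eqVneq (X i l) 0; first by rewrite mul0r.
have [-> |/hY hlj] := eqVneq (Y l j) 0; first by rewrite mulr0.
by case/negP: hn; apply: okij_trans hil hlj.
Qed.

Lemma algL_delta (X : 'M[F]_N) i j : algL blk L X -> X i j != 0 -> algL blk L (delta_mx i j : 'M[F]_N).
Proof.
move=> /algLP hX hij; apply/algLP => a b; rewrite mxE.
case: (a == i) / eqP => [-> |] //=; last by rewrite eqxx.
case: (b == j) / eqP => [-> _|] //=; last by rewrite eqxx.
exact: hX.
Qed.

Lemma algL_deltaii i : algL blk L (delta_mx i i : 'M[F]_N).
Proof.
apply/algLP => a b; rewrite mxE.
case: (a == i) / eqP => [-> |] //=; last by rewrite eqxx.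
case: (b == i) / eqP => [-> _|] //=; last by rewrite eqxx.
by apply/andP; split => //; apply/forallP => S; apply/implyP => _; apply/implyP.
Qed.

Lemma algL_blockD (X : 'M[F]_N) : algL blk L X -> blockD blk X.
Proof. by case/andP. Qed.

End Mx.

Theorem lemma3p7 (F : numClosedFieldType) (m n l : nat)
    (hml : (1 <= m + l)%N) (hnl : (1 <= n + l)%N)
    (N k : nat) (blk : 'I_N -> 'I_k) (L : {set {set 'I_N}})
    (hL : is_proj_lattice L)
    (B : algType F) (phi : 'M[F]_N -> B)
    (hphi : unital_subalg_embedding (blockD blk) phi)
    (delta : 'M[F]_N -> B)
    (hlin : {in algL blk L &, forall X Y, forall a : F,
               delta (a *: X + Y) = a *: delta X + delta Y})
    (heq : {in algL blk L, forall X,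
               delta (X *m X) *+ (m + n + l)
               = (delta X * phi X) *+ m + (phi X * delta X) *+ n
                 + (phi X * delta 1%:M * phi X) *+ l}) :
  {in algL blk L &, forall X Y,
      delta (X *m Y) = delta X * phi Y /\ delta (X *m Y) = phi X * delta Y}.
Proof.
case: hphi => hpl hpm hp1 _.
set A := algL blk L.
have A1 : A 1%:M := algL1 F blk L.
have A0 : A 0.
  by apply/algLP => i j; rewrite mxE eqxx.
have D0 : blockD blk (0 : 'M[F]_N) := algL_blockD A0.
have phi0 : phi 0 = 0.
  have := hpl 0 0 D0 D0 1; rewrite !scale1r addr0 => h.
  by apply: (@addrI _ (phi 0)); rewrite addr0 -h.
have delta0 : delta 0 = 0.
  have := hlin 0 0 A0 A0 1; rewrite !scale1r addr0 => h.
  by apply: (@addrI _ (delta 0)); rewrite addr0 -h.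
have canc : forall (x : B) kk, (0 < kk)%N -> x *+ kk = 0 -> x = 0.
  move=> x kk hk /eqP; rewrite -scaler_nat scaler_eq0 pnatr_eq0.
  by case: kk hk => [//|kk] _ /eqP.
set t := delta 1%:M.
pose Pr Z := delta Z = t * phi Z /\ phi Z * t = t * phi Z.
have phiL : {in A &, forall X Y, forall a : F, phi (a *: X + Y) = a *: phi X + phi Y}.
  by move=> X Y hX hY a; apply: hpl; [exact: (algL_blockD hX) | exact: (algL_blockD hY)].
have phiM : {in A &, forall X Y, phi (X *m Y) = phi X * phi Y}.
  by move=> X Y hX hY; apply: hpm; [exact: (algL_blockD hX) | exact: (algL_blockD hY)].
have Pr_lin : forall (a : F) Z W, A Z -> A W -> Pr Z -> Pr W -> Pr (a *: Z + W).
  move=> a Z W hZ hW [dZ cZ] [dW cW]; rewrite /Pr hlin // phiL // dZ dW.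
  by rewrite mulrDr mulrDl -scalerAl -scalerAr cZ cW scalerAr.
have Pr_idem : forall U, A U -> U *m U = U -> Pr U.
  move=> U hU hUU.
  set V := 1%:M - U.
  have eV : V = (-1) *: U + 1%:M by rewrite scaleN1r addrC.
  have hV : A V by rewrite eV; apply: algL_lin.
  have eUV : 1 *: U + V = 1%:M by rewrite scale1r /V addrC subrK.
  have UV : U *m V = 0 by rewrite /V mulmxBr mulmx1 hUU subrr.
  have VU : V *m U = 0 by rewrite /V mulmxBl mul1mx hUU subrr.
  have VV : V *m V = V by rewrite {1}/V mulmxBl mul1mx UV subr0.
  have := @proj_comm B (phi U) (phi V) (delta U) (delta V) t m n l canc hml hnl.
  rewrite -!phiM // UV VU phi0 hUU VV.
  have -> : phi U + phi V = 1 by rewrite -[phi U]scale1r -phiL // eUV.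
  have -> : delta U + delta V = t by rewrite -[delta U]scale1r -hlin // eUV.
  move=> /(_ erefl erefl erefl erefl erefl).
  have := heq U hU; rewrite hUU => -> /(_ erefl).
  have := heq V hV; rewrite VV => -> /(_ erefl erefl) [h1 h2].
  by split.
have Pr0 : Pr 0 by rewrite /Pr delta0 phi0 mulr0 mul0r.
have Pr_ii : forall i, Pr (delta_mx i i).
  by move=> i; apply: Pr_idem; [apply: algL_deltaii | rewrite mul_delta_mx].
have Pr_ij : forall X i j, A X -> X i j != 0 -> Pr (delta_mx i j).
  move=> X i j hX hij.
  have [<-|nij] := eqVneq i j; first exact: Pr_ii.
  have Aii : A (delta_mx i i) by apply: algL_deltaii.
  have Aij : A (delta_mx i j) by apply: algL_delta hX hij.
  set U := (delta_mx i i + delta_mx i j : 'M[F]_N).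
  have AU : A U by rewrite /U -[delta_mx i i]scale1r; apply: algL_lin.
  have PU : Pr U.
    apply: Pr_idem => //.
    rewrite /U mulmxDl !mulmxDr !mul_delta_mx !mul_delta_mx_0 1?eq_sym //.
    by rewrite !addr0.
  have -> : delta_mx i j = (-1) *: delta_mx i i + U.
    by rewrite /U scaleN1r addKr.
  exact: Pr_lin.
have PrA : forall X, A X -> Pr X.
  move=> X hX.
  suff [] : A (\sum_(i < N) \sum_(j < N) X i j *: delta_mx i j) /\
            Pr (\sum_(i < N) \sum_(j < N) X i j *: delta_mx i j).
    by rewrite -matrix_sum_delta.
  have Kadd : forall Z W, A Z /\ Pr Z -> A W /\ Pr W -> A (Z + W) /\ Pr (Z + W).
    move=> Z W [hZ pZ] [hW pW]; rewrite -[Z]scale1r; split.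
      exact: algL_lin.
    exact: Pr_lin.
  have K0 : A 0 /\ Pr 0 by [].
  apply: (big_ind (fun Z => A Z /\ Pr Z)) => // i _.
  apply: (big_ind (fun Z => A Z /\ Pr Z)) => // j _.
  have [->|hij] := eqVneq (X i j) 0; first by rewrite scale0r.
  have Aij : A (delta_mx i j) by apply: algL_delta hX hij.
  rewrite -[_ *: _]addr0; split; first exact: algL_lin.
  by apply: Pr_lin => //; apply: Pr_ij hX hij.
move=> X Y hX hY.
have hXY : A (X *m Y) by apply: algL_mul.
have [dX cX] := PrA X hX; have [dY cY] := PrA Y hY; have [dXY _] := PrA _ hXY.
rewrite dXY phiM // dX dY !mulrA cX; split => //.
Qed.
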